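(* Let $\mathcal X\subseteq\mathcal P(\omega)$ be a family of nonempty sets and let $\mathcal Z\subseteq\mathcal P(\omega)$ be closed under supersets. Then the games $\mathfrak G(\mathcal X,\omega,\mathcal Z^c)$ and $\mathfrak G(\mathcal X,[\omega]^{<\omega},\mathcal Z^c)$ are equivalent: a player has a winning strategy in one game if and only if the same player has a winning strategy in the other.
   Context: $\mathcal Z^c=\mathcal P(\omega)\setminus\mathcal Z$. Game $\mathfrak G(\mathcal X,\omega,\mathcal W)$: at each stage $k\in\omega$, player I chooses $X_k\in\mathcal X$ and player II responds with $n_k\in X_k$; II wins if $\{n_k:k\in\omega\}\in\mathcal W$. Game $\mathfrak G(\mathcal X,[\omega]^{<\omega},\mathcal W)$: at each stage $k$, player I chooses $X_k\in\mathcal X$ and player II responds with a nonempty finite set $s_k\subseteq X_k$; II wins if $\bigcup_k s_k\in\mathcal W$. In each game I wins when II does not. *)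

(* Defs.v *)
From Stdlib Require Import List.
Import ListNotations.

Definition subset_omega := nat -> Prop.
Definition family := subset_omega -> Prop.

(* A generic game G(X, M, W): at stage k, player I plays X_k in X, player II
   answers a move m_k : M with [legal X_k m_k]; II wins iff
   [W (outcome (fun k => m_k))]. *)

Definition hist {M : Type} (Xs : nat -> subset_omega) (ms : nat -> M) (k : nat)
  : list (subset_omega * M) :=
  map (fun i => (Xs i, ms i)) (seq 0 k).

Definition I_wins {M : Type} (X : family) (legal : subset_omega -> M -> Prop)
    (outcome : (nat -> M) -> subset_omega) (W : family) : Prop :=
  exists sigma : list (subset_omega * M) -> subset_omega,
    (forall h, X (sigma h)) /\
    forall (Xs : nat -> subset_omega) (ms : nat -> M),
      (forall k, Xs k = sigma (hist Xs ms k)) ->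
      (forall k, legal (Xs k) (ms k)) ->
      ~ W (outcome ms).

Definition II_wins {M : Type} (X : family) (legal : subset_omega -> M -> Prop)
    (outcome : (nat -> M) -> subset_omega) (W : family) : Prop :=
  exists tau : list (subset_omega * M) -> subset_omega -> M,
    (forall h A, X A -> legal A (tau h A)) /\
    forall (Xs : nat -> subset_omega) (ms : nat -> M),
      (forall k, X (Xs k)) ->
      (forall k, ms k = tau (hist Xs ms k) (Xs k)) ->
      W (outcome ms).

(* Game G(X, omega, W): II answers with n_k in X_k; outcome {n_k : k}. *)
Definition legal_pt (A : subset_omega) (n : nat) : Prop := A n.
Definition outcome_pt (ns : nat -> nat) : subset_omega :=
  fun m => exists k, ns k = m.

(* Game G(X, [omega]^<omega, W): II answers with a nonempty finite s_k
   subset of X_k (a list); outcome is the union of the s_k. *)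
Definition legal_fin (A : subset_omega) (s : list nat) : Prop :=
  s <> [] /\ forall m, In m s -> A m.
Definition outcome_fin (ss : nat -> list nat) : subset_omega :=
  fun m => exists k, In m (ss k).

Definition upward_closed (Z : family) : Prop :=
  forall A B : subset_omega, Z A -> (forall n, A n -> B n) -> Z B.

Definition complement (Z : family) : family := fun A => ~ Z A.

(* Main.v *)
Require Import Defs.
From Stdlib Require Import List.
Import ListNotations.

Lemma hist_S {M : Type} (Xs : nat -> subset_omega) (ms : nat -> M) k :
  hist Xs ms (S k) = hist Xs ms k ++ [(Xs k, ms k)].
Proof. unfold hist. rewrite seq_S, map_app. reflexivity. Qed.

Lemma hist_map {M N : Type} (f : M -> N) (Xs : nat -> subset_omega) (ms : nat -> M) k :
  map (fun p => (fst p, f (snd p))) (hist Xs ms k) = hist Xs (fun i => f (ms i)) k.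
Proof. unfold hist. rewrite map_map. reflexivity. Qed.

Lemma hd_in (s : list nat) : s <> [] -> In (hd 0 s) s.
Proof. destruct s; simpl; [congruence | auto]. Qed.

Definition rebuild (tau : list (subset_omega * list nat) -> subset_omega -> list nat)
  (h : list (subset_omega * nat)) : list (subset_omega * list nat) :=
  fold_left (fun acc p => acc ++ [(fst p, tau acc (fst p))]) h [].

Lemma rebuild_app tau h p :
  rebuild tau (h ++ [p]) = rebuild tau h ++ [(fst p, tau (rebuild tau h) (fst p))].
Proof. unfold rebuild. rewrite fold_left_app. reflexivity. Qed.

Theorem lemma3p1 (X Z : family)
  (hX : forall A, X A -> exists n, A n)
  (hZ : upward_closed Z) :
  (I_wins X legal_pt outcome_pt (complement Z) <->
   I_wins X legal_fin outcome_fin (complement Z)) /\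
  (II_wins X legal_pt outcome_pt (complement Z) <->
   II_wins X legal_fin outcome_fin (complement Z)).
Proof.
  unfold complement. split; split.
  - intros [sigma [Hs Hw]].
    exists (fun h => sigma (map (fun p => (fst p, hd 0 (snd p))) h)). split; [auto|].
    intros Xs ms Hp Hl Hn.
    apply (Hw Xs (fun i => hd 0 (ms i))).
    + intro k. rewrite Hp. rewrite hist_map. reflexivity.
    + intro k. destruct (Hl k) as [Hne Hin]. apply Hin, hd_in, Hne.
    + intro HZ. apply Hn. eapply hZ; [exact HZ|].
      intros n [k Hk]. exists k. rewrite <- Hk. apply hd_in, (Hl k).
  - intros [sigma [Hs Hw]].
    exists (fun h => sigma (map (fun p => (fst p, [snd p])) h)). split; [auto|].
    intros Xs ns Hp Hl Hn.
    apply (Hw Xs (fun i => [ns i])).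
    + intro k. rewrite Hp. rewrite (hist_map (fun x : nat => [x])). reflexivity.
    + intro k. split; [discriminate|]. intros m [<-|[]]. apply Hl.
    + intro HZ. apply Hn. eapply hZ; [exact HZ|].
      intros n [k [Hk|[]]]. exists k. exact Hk.
  - intros [tau [Ht Hw]].
    exists (fun h A => [tau (map (fun p => (fst p, hd 0 (snd p))) h) A]). split.
    + intros h A HA. split; [discriminate|]. intros m [<-|[]]. apply Ht, HA.
    + intros Xs ms HX Hp HZ.
      apply (Hw Xs (fun i => hd 0 (ms i))); [exact HX| |].
      * intro k. rewrite Hp at 1. simpl. rewrite hist_map. reflexivity.
      * eapply hZ; [exact HZ|]. intros n [k Hk]. exists k.
        rewrite Hp in Hk |- *. simpl in *. destruct Hk as [Hk|[]]. exact Hk.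
  - intros [tau [Ht Hw]].
    exists (fun h A => hd 0 (tau (rebuild tau h) A)). split.
    + intros h A HA. destruct (Ht (rebuild tau h) A HA) as [Hne Hin].
      apply Hin, hd_in, Hne.
    + intros Xs ns HX Hp HZ.
      set (ms := fun k => tau (rebuild tau (hist Xs ns k)) (Xs k)).
      assert (Hr : forall k, rebuild tau (hist Xs ns k) = hist Xs ms k).
      { induction k as [|k IH]; [reflexivity|].
        rewrite !hist_S, rebuild_app, IH. simpl. f_equal. f_equal. f_equal. unfold ms. rewrite IH. reflexivity. }
      apply (Hw Xs ms HX).
      * intro k. unfold ms at 1. rewrite Hr. reflexivity.
      * eapply hZ; [exact HZ|]. intros n [k Hk]. exists k.
        rewrite <- Hk, Hp. apply hd_in. apply (Ht _ _ (HX k)).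
Qed.
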